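(* Let $X_0, \dots, X_{T-1}$ be a binary sequence decomposing into alternating blocks $1^{L_1}0^{G_1}\cdots 1^{L_m}0^{G_m}$, with $\rho = T^{-1}\sum_t X_t$ and $q = m/T$. For a word $w \in \{0,1\}^\ell$ let $\nu(w) = \frac{1}{T-\ell+1}\sum_{t=0}^{T-\ell}\prod_{j=0}^{\ell-1}\mathbf{1}[X_{t+j} = w_j]$. Then there are fixed affine-linear functions $F_w$ ($w \in \{0,1\}^4$), independent of the sequence, such that for every $w \in \{0,1\}^4$, \[ \nu(w) = F_w\bigl(\rho, q, \nu(000), \nu(010), \nu(0000), \nu(0010), \nu(0100), \nu(0110)\bigr) + o(1) \] as $T \to \infty$. That is, beyond the depth-$4$ parameters $(\rho, q, \nu(000), \nu(010))$, the sixteen $4$-word frequencies involve exactly the four new free parameters $\nu(0000), \nu(0010), \nu(0100), \nu(0110)$, for a total of $8$ parameters through depth $5$. *)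

(* Defs.v *)
From HB Require Import structures.
From mathcomp Require Import all_boot all_order all_algebra.
From mathcomp Require Export reals.
Set Implicit Arguments. Unset Strict Implicit. Unset Printing Implicit Defensive.
Import Order.TTheory GRing.Theory Num.Theory.
Local Open Scope ring_scope.

Definition blockseq (s : seq (nat * nat)) : seq bool :=
  flatten [seq nseq p.1 true ++ nseq p.2 false | p <- s].

Definition valid_blocks (s : seq (nat * nat)) : bool :=
  all (fun p => (0 < p.1)%N && (0 < p.2)%N) s.

Section Freq.
Variable R : realType.

Definition rho (X : seq bool) : R := (count id X)%:R / (size X)%:R.

Definition nu (X : seq bool) (w : seq bool) : R :=
  (\sum_(0 <= t < (size X - size w).+1)
      \prod_(j < size w) ((nth false X (t + j) == nth false w j)%:R : R))
  / ((size X - size w).+1)%:R.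

Definition params (s : seq (nat * nat)) : 'I_8 -> R := fun i =>
  let X := blockseq s in
  nth 0 [:: rho X; (size s)%:R / (size X)%:R;
            nu X [:: false; false; false]; nu X [:: false; true; false];
            nu X [:: false; false; false; false]; nu X [:: false; false; true; false];
            nu X [:: false; true; false; false]; nu X [:: false; true; true; false]] i.

Definition affine8 (b : R) (a : 'I_8 -> R) (x : 'I_8 -> R) : R :=
  b + \sum_(i < 8) a i * x i.
End Freq.

(* Main.v *)
Require Import Defs.
From HB Require Import structures.
From mathcomp Require Import all_boot all_order all_algebra reals.
From mathcomp Require Import zify ring lra.
Import Order.TTheory GRing.Theory Num.Theory.
Local Open Scope ring_scope.

Section Aux.
Variable R : realType.

Definition W (X w : seq bool) (t : nat) : R :=
  \prod_(j < size w) ((nth false X (t + j) == nth false w j)%:R).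
Definition C (X w : seq bool) : R := \sum_(0 <= t < (size X - size w).+1) W X w t.

Lemma nuE X w : nu R X w = C X w / ((size X - size w).+1)%:R.
Proof. by []. Qed.

Lemma W01 X w t : 0 <= W X w t <= 1.
Proof.
rewrite /W; apply: (big_ind (fun x : R => 0 <= x <= 1)).
- by rewrite ler01 lexx.
- move=> x y /andP[x0 x1] /andP[y0 y1]; apply/andP; split.
    exact: mulr_ge0.
  exact: mulr_ile1.
- by move=> j _; case: eqP => _; rewrite ?ler01 ?lexx.
Qed.

Lemma C_bound X w : 0 <= C X w <= ((size X - size w).+1)%:R.
Proof.
rewrite /C; apply/andP; split.
  by apply: sumr_ge0 => t _; case/andP: (W01 X w t).
rewrite -[X in _ <= X%:R](subn0 (size X - size w).+1) -sumr_const_nat.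
by apply: ler_sum => t _; case/andP: (W01 X w t).
Qed.

Lemma C_nil X : C X [::] = (size X)%:R + 1.
Proof.
rewrite /C /W /= subn0 (eq_bigr (fun _ => 1)); last by move=> t _; rewrite big_ord0.
by rewrite sumr_const_nat subn0 -addn1 natrD.
Qed.

Lemma C_ext_right X w : (size w < size X)%N ->
  exists2 e : R, 0 <= e <= 1 & C X w = C X (rcons w false) + C X (rcons w true) + e.
Proof.
move=> Hw; rewrite /C !size_rcons.
have -> : (size X - size w = (size X - (size w).+1).+1)%N by lia.
set n := (size X - (size w).+1)%N.
rewrite big_nat_recr //=.
exists (W X w n.+1); first exact: W01.
rewrite -big_split /=; congr (_ + _); apply: eq_bigr => t _.
rewrite /W !size_rcons !big_ord_recr /= !nth_rcons ltnn eqxx.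
have Hp b : \prod_(j < size w) ((nth false X (t + widen_ord (leqnSn _) j) ==
      nth false (rcons w b) (widen_ord (leqnSn _) j))%:R : R)
   = \prod_(j < size w) ((nth false X (t + j) == nth false w j)%:R).
  by apply: eq_bigr => j _; rewrite nth_rcons /= ltn_ord.
rewrite !Hp -mulrDr.
by case: (nth false X (t + size w)); rewrite /= ?addr0 ?add0r mulr1.
Qed.

Lemma C_ext_left X w : (size w < size X)%N ->
  exists2 e : R, 0 <= e <= 1 & C X w = C X (false :: w) + C X (true :: w) + e.
Proof.
move=> Hw; rewrite /C /=.
have -> : (size X - size w = (size X - (size w).+1).+1)%N by lia.
set n := (size X - (size w).+1)%N.
rewrite big_nat_recl //=.
exists (W X w 0); first exact: W01.
rewrite addrC -big_split /=; congr (_ + _); apply: eq_bigr => t _.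
rewrite /W /= !big_ord_recl /= addn0 -mulrDl.
have -> : \prod_(i < size w) ((nth false X (t + bump 0 i) == nth false w (0 + i))%:R : R)
   = \prod_(j < size w) ((nth false X (t.+1 + j) == nth false w j)%:R).
  by apply: eq_bigr => j _; rewrite /bump /= add1n add0n addnS addSn.
by case: (nth false X t); rewrite /= ?addr0 ?add0r mul1r.
Qed.

Lemma C_cons x X w : (size w <= size X)%N -> C (x :: X) w = W (x :: X) w 0 + C X w.
Proof.
move=> Hw; rewrite /C /= subSn // big_nat_recl //.
Qed.

Lemma C_count X : (0 < size X)%N -> C X [:: true] = (count id X)%:R.
Proof.
elim: X => // x X IH _; case: X IH => [|y X] IH.
  by rewrite /C /W /= big_nat1 big_ord1 /=; case: x.
rewrite C_cons // IH //= natrD.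
by rewrite /W big_ord1 /= !natrD; case: x.
Qed.


Fixpoint n10 (X : seq bool) : nat :=
  match X with
  | x :: ((y :: _) as r) => (x && ~~ y) + n10 r
  | _ => 0%N
  end.

Lemma C_n10 X : (1 < size X)%N -> C X [:: true; false] = (n10 X)%:R.
Proof.
elim: X => // x X IH; case: X IH => // y X IH _.
case: X IH => [|z X] IH.
  rewrite /C /W /= big_nat1 !big_ord_recr big_ord0 /= mul1r; by case: x; case: (y); rewrite /= ?mulr1n ?mulr0n ?mulr1 ?mul0r ?mulr0.
rewrite C_cons // IH // [n10 (x :: _)]/= natrD; congr (_ + _).
by rewrite /W !big_ord_recr big_ord0 /= mul1r; case: x; case: (y); rewrite /= ?mulr1n ?mulr0n ?mulr1 ?mul0r ?mulr0.
Qed.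

End Aux.

Lemma n10_true n r : n10 (nseq n.+1 true ++ false :: r) = (1 + n10 (false :: r))%N.
Proof. by elim: n => [|n IH] //=; rewrite IH. Qed.

Lemma n10_false n r : n10 (false :: (nseq n false ++ r)) = n10 (false :: r).
Proof. by elim: n => [|n IH] //=. Qed.

Lemma blockseq_cons p s : blockseq (p :: s) = nseq p.1 true ++ nseq p.2 false ++ blockseq s.
Proof. by rewrite /blockseq /= catA. Qed.

Lemma n10_blockseq s : valid_blocks s -> n10 (blockseq s) = size s.
Proof.
elim: s => // [[L G]] s IH /= /andP[/andP[/= HL HG] Hs].
rewrite blockseq_cons; case: L HL => // L _; case: G HG => // G _.
rewrite n10_true n10_false add1n -(IH Hs); congr S.
case: s Hs {IH} => // [[L' G']] s /= /andP[/andP[/= HL' _] _].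
by rewrite blockseq_cons; case: L' HL'.
Qed.

Section Approx.
Variable R : realType.
Definition cf (w : seq bool) : R * seq R :=
  match w with
  | [:: false; false; false; false] => (0, [:: 0; 0; 0; 0; 1; 0; 0; 0])
  | [:: false; false; false; true] => (0, [:: 0; 0; 1; 0; (-1); 0; 0; 0])
  | [:: false; false; true; false] => (0, [:: 0; 0; 0; 0; 0; 1; 0; 0])
  | [:: false; false; true; true] => (1, [:: (-1); (-1); (-1); 0; 0; (-1); 0; 0])
  | [:: false; true; false; false] => (0, [:: 0; 0; 0; 0; 0; 0; 1; 0])
  | [:: false; true; false; true] => (0, [:: 0; 0; 0; 1; 0; 0; (-1); 0])
  | [:: false; true; true; false] => (0, [:: 0; 0; 0; 0; 0; 0; 0; 1])
  | [:: false; true; true; true] => (0, [:: 0; 1; 0; (-1); 0; 0; 0; (-1)])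
  | [:: true; false; false; false] => (0, [:: 0; 0; 1; 0; (-1); 0; 0; 0])
  | [:: true; false; false; true] => (1, [:: (-1); (-1); (-2); 0; 1; 0; 0; 0])
  | [:: true; false; true; false] => (0, [:: 0; 0; 0; 1; 0; (-1); 0; 0])
  | [:: true; false; true; true] => ((-1), [:: 1; 2; 1; (-1); 0; 1; 0; 0])
  | [:: true; true; false; false] => (1, [:: (-1); (-1); (-1); 0; 0; 0; (-1); 0])
  | [:: true; true; false; true] => ((-1), [:: 1; 2; 1; (-1); 0; 0; 1; 0])
  | [:: true; true; true; false] => (0, [:: 0; 1; 0; (-1); 0; 0; 0; (-1)])
  | [:: true; true; true; true] => (0, [:: 1; (-3); 0; 2; 0; 0; 0; 1])
  | _ => (0, [::])
  end.

Definition xs (X : seq bool) : seq R :=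
  [:: C R X [:: true]; C R X [:: true; false];
      C R X [:: false; false; false]; C R X [:: false; true; false];
      C R X [:: false; false; false; false]; C R X [:: false; false; true; false];
      C R X [:: false; true; false; false]; C R X [:: false; true; true; false]].

Lemma ap_0000 X : (5 <= size X)%N ->
  - 10 <= C R X [:: false; false; false; false] - (0 * (size X)%:R + (0 * C R X [:: true] + (0 * C R X [:: true; false] + (0 * C R X [:: false; false; false] + (0 * C R X [:: false; true; false] + (1 * C R X [:: false; false; false; false] + (0 * C R X [:: false; false; true; false] + (0 * C R X [:: false; true; false; false] + (0 * C R X [:: false; true; true; false] + 0))))))))) <= 10.
Proof.
move=> HT.
have HC0 := C_nil R X.
apply/andP; split; lra.
Qed.

Lemma ap_0001 X : (5 <= size X)%N ->
  - 10 <= C R X [:: false; false; false; true] - (0 * (size X)%:R + (0 * C R X [:: true] + (0 * C R X [:: true; false] + (1 * C R X [:: false; false; false] + (0 * C R X [:: false; true; false] + ((-1) * C R X [:: false; false; false; false] + (0 * C R X [:: false; false; true; false] + (0 * C R X [:: false; true; false; false] + (0 * C R X [:: false; true; true; false] + 0))))))))) <= 10.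
Proof.
move=> HT.
have HC0 := C_nil R X.
have [e0 /andP[He0a He0b] E0] := @C_ext_right R X [:: false; false; false] ltac:(by apply: (leq_trans _ HT)). cbn [rcons] in E0.
apply/andP; split; lra.
Qed.

Lemma ap_0010 X : (5 <= size X)%N ->
  - 10 <= C R X [:: false; false; true; false] - (0 * (size X)%:R + (0 * C R X [:: true] + (0 * C R X [:: true; false] + (0 * C R X [:: false; false; false] + (0 * C R X [:: false; true; false] + (0 * C R X [:: false; false; false; false] + (1 * C R X [:: false; false; true; false] + (0 * C R X [:: false; true; false; false] + (0 * C R X [:: false; true; true; false] + 0))))))))) <= 10.
Proof.
move=> HT.
have HC0 := C_nil R X.
apply/andP; split; lra.
Qed.

Lemma ap_0011 X : (5 <= size X)%N ->
  - 10 <= C R X [:: false; false; true; true] - (1 * (size X)%:R + ((-1) * C R X [:: true] + ((-1) * C R X [:: true; false] + ((-1) * C R X [:: false; false; false] + (0 * C R X [:: false; true; false] + (0 * C R X [:: false; false; false; false] + ((-1) * C R X [:: false; false; true; false] + (0 * C R X [:: false; true; false; false] + (0 * C R X [:: false; true; true; false] + 0))))))))) <= 10.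
Proof.
move=> HT.
have HC0 := C_nil R X.
have [e0 /andP[He0a He0b] E0] := @C_ext_left R X [:: false] ltac:(by apply: (leq_trans _ HT)).
have [e1 /andP[He1a He1b] E1] := @C_ext_right R X [::] ltac:(by apply: (leq_trans _ HT)). cbn [rcons] in E1.
have [e2 /andP[He2a He2b] E2] := @C_ext_right R X [:: false] ltac:(by apply: (leq_trans _ HT)). cbn [rcons] in E2.
have [e3 /andP[He3a He3b] E3] := @C_ext_right R X [:: false; false] ltac:(by apply: (leq_trans _ HT)). cbn [rcons] in E3.
have [e4 /andP[He4a He4b] E4] := @C_ext_right R X [:: false; false; true] ltac:(by apply: (leq_trans _ HT)). cbn [rcons] in E4.
apply/andP; split; lra.
Qed.

Lemma ap_0100 X : (5 <= size X)%N ->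
  - 10 <= C R X [:: false; true; false; false] - (0 * (size X)%:R + (0 * C R X [:: true] + (0 * C R X [:: true; false] + (0 * C R X [:: false; false; false] + (0 * C R X [:: false; true; false] + (0 * C R X [:: false; false; false; false] + (0 * C R X [:: false; false; true; false] + (1 * C R X [:: false; true; false; false] + (0 * C R X [:: false; true; true; false] + 0))))))))) <= 10.
Proof.
move=> HT.
have HC0 := C_nil R X.
apply/andP; split; lra.
Qed.

Lemma ap_0101 X : (5 <= size X)%N ->
  - 10 <= C R X [:: false; true; false; true] - (0 * (size X)%:R + (0 * C R X [:: true] + (0 * C R X [:: true; false] + (0 * C R X [:: false; false; false] + (1 * C R X [:: false; true; false] + (0 * C R X [:: false; false; false; false] + (0 * C R X [:: false; false; true; false] + ((-1) * C R X [:: false; true; false; false] + (0 * C R X [:: false; true; true; false] + 0))))))))) <= 10.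
Proof.
move=> HT.
have HC0 := C_nil R X.
have [e0 /andP[He0a He0b] E0] := @C_ext_right R X [:: false; true; false] ltac:(by apply: (leq_trans _ HT)). cbn [rcons] in E0.
apply/andP; split; lra.
Qed.

Lemma ap_0110 X : (5 <= size X)%N ->
  - 10 <= C R X [:: false; true; true; false] - (0 * (size X)%:R + (0 * C R X [:: true] + (0 * C R X [:: true; false] + (0 * C R X [:: false; false; false] + (0 * C R X [:: false; true; false] + (0 * C R X [:: false; false; false; false] + (0 * C R X [:: false; false; true; false] + (0 * C R X [:: false; true; false; false] + (1 * C R X [:: false; true; true; false] + 0))))))))) <= 10.
Proof.
move=> HT.
have HC0 := C_nil R X.
apply/andP; split; lra.
Qed.

Lemma ap_0111 X : (5 <= size X)%N ->
  - 10 <= C R X [:: false; true; true; true] - (0 * (size X)%:R + (0 * C R X [:: true] + (1 * C R X [:: true; false] + (0 * C R X [:: false; false; false] + ((-1) * C R X [:: false; true; false] + (0 * C R X [:: false; false; false; false] + (0 * C R X [:: false; false; true; false] + (0 * C R X [:: false; true; false; false] + ((-1) * C R X [:: false; true; true; false] + 0))))))))) <= 10.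
Proof.
move=> HT.
have HC0 := C_nil R X.
have [e0 /andP[He0a He0b] E0] := @C_ext_left R X [:: false] ltac:(by apply: (leq_trans _ HT)).
have [e1 /andP[He1a He1b] E1] := @C_ext_right R X [:: false] ltac:(by apply: (leq_trans _ HT)). cbn [rcons] in E1.
have [e2 /andP[He2a He2b] E2] := @C_ext_right R X [:: false; true] ltac:(by apply: (leq_trans _ HT)). cbn [rcons] in E2.
have [e3 /andP[He3a He3b] E3] := @C_ext_right R X [:: false; true; true] ltac:(by apply: (leq_trans _ HT)). cbn [rcons] in E3.
apply/andP; split; lra.
Qed.

Lemma ap_1000 X : (5 <= size X)%N ->
  - 10 <= C R X [:: true; false; false; false] - (0 * (size X)%:R + (0 * C R X [:: true] + (0 * C R X [:: true; false] + (1 * C R X [:: false; false; false] + (0 * C R X [:: false; true; false] + ((-1) * C R X [:: false; false; false; false] + (0 * C R X [:: false; false; true; false] + (0 * C R X [:: false; true; false; false] + (0 * C R X [:: false; true; true; false] + 0))))))))) <= 10.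
Proof.
move=> HT.
have HC0 := C_nil R X.
have [e0 /andP[He0a He0b] E0] := @C_ext_left R X [:: false; false; false] ltac:(by apply: (leq_trans _ HT)).
apply/andP; split; lra.
Qed.

Lemma ap_1001 X : (5 <= size X)%N ->
  - 10 <= C R X [:: true; false; false; true] - (1 * (size X)%:R + ((-1) * C R X [:: true] + ((-1) * C R X [:: true; false] + ((-2) * C R X [:: false; false; false] + (0 * C R X [:: false; true; false] + (1 * C R X [:: false; false; false; false] + (0 * C R X [:: false; false; true; false] + (0 * C R X [:: false; true; false; false] + (0 * C R X [:: false; true; true; false] + 0))))))))) <= 10.
Proof.
move=> HT.
have HC0 := C_nil R X.
have [e0 /andP[He0a He0b] E0] := @C_ext_left R X [:: false] ltac:(by apply: (leq_trans _ HT)).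
have [e1 /andP[He1a He1b] E1] := @C_ext_left R X [:: false; false] ltac:(by apply: (leq_trans _ HT)).
have [e2 /andP[He2a He2b] E2] := @C_ext_left R X [:: false; false; false] ltac:(by apply: (leq_trans _ HT)).
have [e3 /andP[He3a He3b] E3] := @C_ext_right R X [::] ltac:(by apply: (leq_trans _ HT)). cbn [rcons] in E3.
have [e4 /andP[He4a He4b] E4] := @C_ext_right R X [:: false] ltac:(by apply: (leq_trans _ HT)). cbn [rcons] in E4.
have [e5 /andP[He5a He5b] E5] := @C_ext_right R X [:: true; false; false] ltac:(by apply: (leq_trans _ HT)). cbn [rcons] in E5.
apply/andP; split; lra.
Qed.

Lemma ap_1010 X : (5 <= size X)%N ->
  - 10 <= C R X [:: true; false; true; false] - (0 * (size X)%:R + (0 * C R X [:: true] + (0 * C R X [:: true; false] + (0 * C R X [:: false; false; false] + (1 * C R X [:: false; true; false] + (0 * C R X [:: false; false; false; false] + ((-1) * C R X [:: false; false; true; false] + (0 * C R X [:: false; true; false; false] + (0 * C R X [:: false; true; true; false] + 0))))))))) <= 10.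
Proof.
move=> HT.
have HC0 := C_nil R X.
have [e0 /andP[He0a He0b] E0] := @C_ext_left R X [:: false; true; false] ltac:(by apply: (leq_trans _ HT)).
apply/andP; split; lra.
Qed.

Lemma ap_1011 X : (5 <= size X)%N ->
  - 10 <= C R X [:: true; false; true; true] - ((-1) * (size X)%:R + (1 * C R X [:: true] + (2 * C R X [:: true; false] + (1 * C R X [:: false; false; false] + ((-1) * C R X [:: false; true; false] + (0 * C R X [:: false; false; false; false] + (1 * C R X [:: false; false; true; false] + (0 * C R X [:: false; true; false; false] + (0 * C R X [:: false; true; true; false] + 0))))))))) <= 10.
Proof.
move=> HT.
have HC0 := C_nil R X.
have [e0 /andP[He0a He0b] E0] := @C_ext_left R X [:: false] ltac:(by apply: (leq_trans _ HT)).
have [e1 /andP[He1a He1b] E1] := @C_ext_left R X [:: false; false] ltac:(by apply: (leq_trans _ HT)).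
have [e2 /andP[He2a He2b] E2] := @C_ext_left R X [:: false; true; false] ltac:(by apply: (leq_trans _ HT)).
have [e3 /andP[He3a He3b] E3] := @C_ext_right R X [::] ltac:(by apply: (leq_trans _ HT)). cbn [rcons] in E3.
have [e4 /andP[He4a He4b] E4] := @C_ext_right R X [:: false] ltac:(by apply: (leq_trans _ HT)). cbn [rcons] in E4.
have [e5 /andP[He5a He5b] E5] := @C_ext_right R X [:: true; false] ltac:(by apply: (leq_trans _ HT)). cbn [rcons] in E5.
have [e6 /andP[He6a He6b] E6] := @C_ext_right R X [:: true; false; true] ltac:(by apply: (leq_trans _ HT)). cbn [rcons] in E6.
apply/andP; split; lra.
Qed.

Lemma ap_1100 X : (5 <= size X)%N ->
  - 10 <= C R X [:: true; true; false; false] - (1 * (size X)%:R + ((-1) * C R X [:: true] + ((-1) * C R X [:: true; false] + ((-1) * C R X [:: false; false; false] + (0 * C R X [:: false; true; false] + (0 * C R X [:: false; false; false; false] + (0 * C R X [:: false; false; true; false] + ((-1) * C R X [:: false; true; false; false] + (0 * C R X [:: false; true; true; false] + 0))))))))) <= 10.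
Proof.
move=> HT.
have HC0 := C_nil R X.
have [e0 /andP[He0a He0b] E0] := @C_ext_left R X [:: false] ltac:(by apply: (leq_trans _ HT)).
have [e1 /andP[He1a He1b] E1] := @C_ext_left R X [:: false; false] ltac:(by apply: (leq_trans _ HT)).
have [e2 /andP[He2a He2b] E2] := @C_ext_left R X [:: true; false; false] ltac:(by apply: (leq_trans _ HT)).
have [e3 /andP[He3a He3b] E3] := @C_ext_right R X [::] ltac:(by apply: (leq_trans _ HT)). cbn [rcons] in E3.
have [e4 /andP[He4a He4b] E4] := @C_ext_right R X [:: false] ltac:(by apply: (leq_trans _ HT)). cbn [rcons] in E4.
apply/andP; split; lra.
Qed.

Lemma ap_1101 X : (5 <= size X)%N ->
  - 10 <= C R X [:: true; true; false; true] - ((-1) * (size X)%:R + (1 * C R X [:: true] + (2 * C R X [:: true; false] + (1 * C R X [:: false; false; false] + ((-1) * C R X [:: false; true; false] + (0 * C R X [:: false; false; false; false] + (0 * C R X [:: false; false; true; false] + (1 * C R X [:: false; true; false; false] + (0 * C R X [:: false; true; true; false] + 0))))))))) <= 10.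
Proof.
move=> HT.
have HC0 := C_nil R X.
have [e0 /andP[He0a He0b] E0] := @C_ext_left R X [:: false] ltac:(by apply: (leq_trans _ HT)).
have [e1 /andP[He1a He1b] E1] := @C_ext_left R X [:: false; false] ltac:(by apply: (leq_trans _ HT)).
have [e2 /andP[He2a He2b] E2] := @C_ext_left R X [:: true; false] ltac:(by apply: (leq_trans _ HT)).
have [e3 /andP[He3a He3b] E3] := @C_ext_left R X [:: true; false; false] ltac:(by apply: (leq_trans _ HT)).
have [e4 /andP[He4a He4b] E4] := @C_ext_right R X [::] ltac:(by apply: (leq_trans _ HT)). cbn [rcons] in E4.
have [e5 /andP[He5a He5b] E5] := @C_ext_right R X [:: false] ltac:(by apply: (leq_trans _ HT)). cbn [rcons] in E5.
have [e6 /andP[He6a He6b] E6] := @C_ext_right R X [:: true; true; false] ltac:(by apply: (leq_trans _ HT)). cbn [rcons] in E6.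
apply/andP; split; lra.
Qed.

Lemma ap_1110 X : (5 <= size X)%N ->
  - 10 <= C R X [:: true; true; true; false] - (0 * (size X)%:R + (0 * C R X [:: true] + (1 * C R X [:: true; false] + (0 * C R X [:: false; false; false] + ((-1) * C R X [:: false; true; false] + (0 * C R X [:: false; false; false; false] + (0 * C R X [:: false; false; true; false] + (0 * C R X [:: false; true; false; false] + ((-1) * C R X [:: false; true; true; false] + 0))))))))) <= 10.
Proof.
move=> HT.
have HC0 := C_nil R X.
have [e0 /andP[He0a He0b] E0] := @C_ext_left R X [:: true; false] ltac:(by apply: (leq_trans _ HT)).
have [e1 /andP[He1a He1b] E1] := @C_ext_left R X [:: true; true; false] ltac:(by apply: (leq_trans _ HT)).
apply/andP; split; lra.
Qed.

Lemma ap_1111 X : (5 <= size X)%N ->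
  - 10 <= C R X [:: true; true; true; true] - (0 * (size X)%:R + (1 * C R X [:: true] + ((-3) * C R X [:: true; false] + (0 * C R X [:: false; false; false] + (2 * C R X [:: false; true; false] + (0 * C R X [:: false; false; false; false] + (0 * C R X [:: false; false; true; false] + (0 * C R X [:: false; true; false; false] + (1 * C R X [:: false; true; true; false] + 0))))))))) <= 10.
Proof.
move=> HT.
have HC0 := C_nil R X.
have [e0 /andP[He0a He0b] E0] := @C_ext_left R X [:: true; false] ltac:(by apply: (leq_trans _ HT)).
have [e1 /andP[He1a He1b] E1] := @C_ext_left R X [:: true; true; false] ltac:(by apply: (leq_trans _ HT)).
have [e2 /andP[He2a He2b] E2] := @C_ext_right R X [:: true] ltac:(by apply: (leq_trans _ HT)). cbn [rcons] in E2.
have [e3 /andP[He3a He3b] E3] := @C_ext_right R X [:: true; true] ltac:(by apply: (leq_trans _ HT)). cbn [rcons] in E3.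
have [e4 /andP[He4a He4b] E4] := @C_ext_right R X [:: true; true; true] ltac:(by apply: (leq_trans _ HT)). cbn [rcons] in E4.
apply/andP; split; lra.
Qed.


Lemma approx X (w : seq bool) : (5 <= size X)%N -> size w = 4%N ->
  `| C R X w - ((cf w).1 * (size X)%:R + \sum_(i < 8) nth 0 (cf w).2 i * nth 0 (xs X) i) | <= 10.
Proof.
move=> HT; case: w => [|a [|b [|c [|d [|]]]]] //= _.
case: a; case: b; case: c; case: d; rewrite !big_ord_recl big_ord0 /= ler_norml.
exact: ap_1111 X HT.
exact: ap_1110 X HT.
exact: ap_1101 X HT.
exact: ap_1100 X HT.
exact: ap_1011 X HT.
exact: ap_1010 X HT.
exact: ap_1001 X HT.
exact: ap_1000 X HT.
exact: ap_0111 X HT.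
exact: ap_0110 X HT.
exact: ap_0101 X HT.
exact: ap_0100 X HT.
exact: ap_0011 X HT.
exact: ap_0010 X HT.
exact: ap_0001 X HT.
exact: ap_0000 X HT.
Qed.

Lemma cf_bounds (w : seq bool) : size w = 4%N ->
  (forall i : 'I_8, -3 <= nth 0 (cf w).2 i <= 3) /\ -1 <= (cf w).1 <= 1.
Proof.
case: w => [|a [|b [|c [|d [|]]]]] //= _.
case: a; case: b; case: c; case: d; (split; last by rewrite /=; apply/andP; split; lra);
  move=> [[|[|[|[|[|[|[|[|i]]]]]]]] Hi] //=; apply/andP; split; lra.
Qed.

Lemma final (T y c0 K : R) (c p D x : 'I_8 -> R) :
  5 <= T -> 0 <= K ->
  (forall i, [/\ 0 <= p i <= 1, T - 3 <= D i <= T & p i * D i = x i]) ->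
  (forall i, -3 <= c i <= 3) -> -1 <= c0 <= 1 ->
  `|y - (c0 * T + \sum_i c i * x i)| <= K ->
  `|y / (T - 3) - (c0 + \sum_i c i * p i)| <= (K + 75) / (T - 3).
Proof.
move=> HT HK Hi Hc Hc0 Hy.
have HT3 : 0 < T - 3 by lra.
set S := \sum_i c i * (x i - (T - 3) * p i).
have HS : `|S| <= 72.
  apply: le_trans (ler_norm_sum _ _ _) _.
  apply: (@le_trans _ _ (\sum_(i < 8) (9:R))).
    apply: ler_sum => i _.
    have [/andP[p0 p1] /andP[D0 D1] E] := Hi i; have /andP[c1 c2] := Hc i.
    have h1 : 0 <= p i * (D i - (T - 3)) by apply: mulr_ge0; lra.
    have h2 : 0 <= (1 - p i) * (D i - (T - 3)) by apply: mulr_ge0; lra.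
    have h3 : 0 <= (3 - c i) * (p i * (D i - (T - 3))) by apply: mulr_ge0; lra.
    have h4 : 0 <= (3 + c i) * (p i * (D i - (T - 3))) by apply: mulr_ge0; lra.
    have -> : c i * (x i - (T - 3) * p i) = c i * (p i * (D i - (T - 3))) by rewrite -E; ring.
    rewrite ler_norml; apply/andP; split; lra.
  by rewrite sumr_const card_ord -mulr_natr; lra.
have Heq : y / (T - 3) - (c0 + \sum_i c i * p i)
    = ((y - (c0 * T + \sum_i c i * x i)) + 3 * c0 + S) / (T - 3).
  have -> : S = \sum_i c i * x i - (T - 3) * \sum_i c i * p i.
    by rewrite /S mulr_sumr -sumrB; apply: eq_bigr => i _; ring.
  by field; rewrite gt_eqF.
rewrite Heq normrM normfV (gtr0_norm HT3).
apply: ler_wpM2r; first by rewrite invr_ge0 ltW.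
have H1 := ler_normD (y - (c0 * T + \sum_i c i * x i)) (3 * c0).
have H2 := ler_normD (y - (c0 * T + \sum_i c i * x i) + 3 * c0) S.
have H3 : `|3 * c0| <= 3 by rewrite ler_norml; apply/andP; split; lra.
lra.
Qed.

Lemma divb (x D : R) : 0 < D -> 0 <= x <= D -> 0 <= x / D <= 1 /\ x / D * D = x.
Proof.
move=> HD /andP[x0 xD]; split; last by rewrite divfK // gt_eqF.
apply/andP; split; first by rewrite divr_ge0 // ltW.
by rewrite ler_pdivrMr // mul1r.
Qed.

Lemma Dw (X w : seq bool) : (size w <= size X)%N ->
  ((size X - size w).+1)%:R = (size X)%:R - (size w)%:R + 1 :> R.
Proof. by move=> H; rewrite -addn1 natrD natrB. Qed.

Definition Dl (T : R) : seq R := [:: T; T; T - 2; T - 2; T - 3; T - 3; T - 3; T - 3].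

Lemma plink s (i : 'I_8) : valid_blocks s -> (5 <= size (blockseq s))%N ->
  [/\ 0 <= params R s i <= 1,
      (size (blockseq s))%:R - 3 <= nth 0 (Dl (size (blockseq s))%:R) i <= (size (blockseq s))%:R
    & params R s i * nth 0 (Dl (size (blockseq s))%:R) i = nth 0 (xs (blockseq s)) i].
Proof.
move=> Hs HT; set X := blockseq s.
have HT0 : 0 < (size X)%:R :> R by rewrite ltr0n; apply: leq_trans HT.
have HT5 : 5 <= (size X)%:R :> R by rewrite (ler_nat R 5).
have Hnu w : (size w < 5)%N -> 0 <= nu R X w <= 1 /\ nu R X w * ((size X)%:R - (size w)%:R + 1) = C R X w.
  move=> Hw; rewrite nuE -Dw; last exact: ltnW (leq_trans Hw HT).
  by apply: divb; [rewrite ltr0Sn | exact: C_bound].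
case: i => [[|[|[|[|[|[|[|[|i]]]]]]]] Hi] //=; rewrite /params /=.
- have [h1 h2] := @divb (count id X)%:R _ HT0 ltac:(by rewrite ler0n ler_nat count_size).
  by rewrite /xs C_count ?(leq_trans _ HT) //; split => //; lra.
- have HC := C_n10 R X ltac:(by apply: leq_trans HT).
  have [_ HCb] := andP (C_bound R X [:: true; false]).
  rewrite HC n10_blockseq // in HCb.
  have HCb' : (size s)%:R <= (size X)%:R :> R.
    by apply: le_trans HCb _; rewrite ler_nat /= ltn_subrL; apply/andP; split => //; apply: leq_trans HT.
  have [h1 h2] := @divb (size s)%:R _ HT0 ltac:(by rewrite ler0n HCb').
  by rewrite /xs HC n10_blockseq //; split => //; lra.
all: match goal with |- context [nu R _ ?w] => have [h1 h2] := Hnu w isT end; rewrite /= in h2.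
all: by split => //; [lra | rewrite /xs; move: h2; (have -> : forall k : nat, (k.+1)%:R = k%:R + 1 :> R by move=> k; rewrite -addn1 natrD); move=> <-; congr (_ * _); lra].
Qed.
End Approx.

Theorem proposition3p3 (R : realType) :
  exists (b : 4.-tuple bool -> R) (a : 4.-tuple bool -> 'I_8 -> R),
  forall eps : R, 0 < eps ->
  exists T0 : nat,
  forall s : seq (nat * nat), valid_blocks s ->
  (T0 <= size (blockseq s))%N ->
  forall w : 4.-tuple bool,
    `| nu R (blockseq s) w - affine8 (b w) (a w) (params R s) | <= eps.
Proof.
exists (fun w => (cf R w).1), (fun w i => nth 0 (cf R w).2 i).
move=> eps Heps.
set N := Num.trunc (85 / eps).
exists (maxn 5 N.+4) => s Hs HT0 w.
have HT : (5 <= size (blockseq s))%N by apply: leq_trans HT0; rewrite leq_maxl.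
have HN : (N.+4 <= size (blockseq s))%N by apply: leq_trans HT0; rewrite leq_maxr.
set X := blockseq s in HT HN *.
have HT5 : 5 <= (size X)%:R :> R by rewrite (ler_nat R 5).
have Hw : size w = 4%N by rewrite size_tuple.
have [Hc Hc0] := @cf_bounds R w Hw.
have hD : ((size X - size w).+1)%:R = (size X)%:R - 3 :> R.
  rewrite Dw Hw; first lra.
  by apply: leq_trans HT.
rewrite /affine8 nuE hD.
apply: le_trans (@final R (size X)%:R (C R X w) (cf R w).1 10
   (fun i => nth 0 (cf R w).2 i) (params R s) (fun i => nth 0 (Dl R (size X)%:R) i)
   (fun i => nth 0 (xs R X) i) HT5 _ _ Hc Hc0 (@approx R X w HT Hw)) _.
- by [].
- by move=> i; exact: plink.
have HT3 : 0 < (size X)%:R - 3 :> R by lra.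
rewrite ler_pdivrMr //.
have h := truncnS_gt (85 / eps).
have hN : (N.+1)%:R + 3 <= (size X)%:R :> R.
  by rewrite -natrD ler_nat addn3.
rewrite ltr_pdivrMr // in h.
have : 85 < ((size X)%:R - 3) * eps.
  apply: lt_le_trans h _; rewrite ler_pM2r //; lra.
lra.
Qed.
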